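(* Let $f_1$ admit a Taylor expansion $f_1(t)=\sum_{m\ge0}b_mt^m$ on $[-1,1]$ with coefficients satisfying $c_2r^m\le b_m\le c_1r^m$ for all $m\ge0$, for some constants $0<r<1$ and $0<c_2\le c_1$. Then for every integer $\alpha\ge1$ there exist constants $C_{1,\alpha},C_{2,\alpha}>0$ (depending only on $\alpha$, $d$, and the constants $r,c_1,c_2$) such that for all $m\ge0$ $$C_{2,\alpha}\Big(\frac r4\Big)^m\le\lambda_{m,\alpha}\le C_{1,\alpha}(m+1)^{\alpha-1}r^m.$$
   Context: $d\ge2$; $|S^{d-2}|$ is the surface area of the unit sphere $S^{d-2}$. For integers $k,\alpha\ge0$, $b_{j,\alpha}$ denotes the coefficient of $t^j$ in the power series of $f_1^\alpha$, and $$\lambda_{k,\alpha}=\frac{|S^{d-2}|\Gamma((d-1)/2)}{2^{k+1}}\sum_{s\ge0}b_{2s+k,\alpha}\frac{(2s+k)!}{(2s)!}\frac{\Gamma(s+1/2)}{\Gamma(s+k+d/2)}$$ (this is the eigenvalue of the integral operator of the dot-product kernel $(x,x')\mapsto f_1^\alpha(\langle x,x'\rangle)$ on $L_2(S^{d-1},\sigma_{d-1})$ on spherical harmonics of degree $k$). *)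

(* Defs.v *)
From Stdlib Require Import Reals Lra Lia Arith Factorial.
Open Scope R_scope.

(* halfGamma n = Gamma(n/2) for n >= 1 (Gamma(1/2) = sqrt PI, Gamma(1) = 1,
   Gamma(x+1) = x Gamma(x)).  The value at n = 0 is junk and never used. *)
Fixpoint halfGamma (n : nat) : R :=
  match n with
  | O => 0
  | S O => sqrt PI
  | S (S O) => 1
  | S (S m) => (INR m / 2) * halfGamma m
  end.

(* |S^{d-2}| = 2 pi^{(d-1)/2} / Gamma((d-1)/2)  (for d = 2: |S^0| = 2). *)
Definition sphere_area (d : nat) : R :=
  2 * sqrt PI ^ (d - 1) / halfGamma (d - 1).

(* Coefficients of the power series of f_1^alpha, given the coefficient
   sequence b of f_1: alpha-fold Cauchy product. *)
Fixpoint coef_pow (b : nat -> R) (alpha : nat) (j : nat) : R :=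
  match alpha with
  | O => if Nat.eqb j 0 then 1 else 0
  | S a => sum_f_R0 (fun i => b i * coef_pow b a (j - i)%nat) j
  end.

Definition lambda_pref (d k : nat) : R :=
  sphere_area d * halfGamma (d - 1) / 2 ^ (k + 1).

Definition lambda_term (d : nat) (b : nat -> R) (alpha k s : nat) : R :=
  coef_pow b alpha (2 * s + k)
  * (INR (Factorial.fact (2 * s + k)) / INR (Factorial.fact (2 * s)))
  * (halfGamma (2 * s + 1) / halfGamma (2 * s + 2 * k + d)).

Definition is_lambda (d : nat) (b : nat -> R) (alpha k : nat) (l : R) : Prop :=
  infinite_sum (fun s => lambda_pref d k * lambda_term d b alpha k s) l.

(* Main.v *)
Require Import Defs.
From Stdlib Require Import Reals Lra Lia Arith Factorial.
Open Scope R_scope.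

Lemma hg_rec : forall m, halfGamma (S m + 2) = INR (S m) / 2 * halfGamma (S m).
Proof. intro m. replace (S m + 2)%nat with (S (S (S m))) by lia. reflexivity. Qed.

Lemma hg_pos : forall n, (1 <= n)%nat -> 0 < halfGamma n.
Proof.
  assert (H : forall m, 0 < halfGamma (S m) /\ 0 < halfGamma (S (S m))).
  { induction m as [|m [IH1 IH2]].
    - split; simpl. apply sqrt_lt_R0, PI_RGT_0. lra.
    - split; [exact IH2|]. replace (S (S (S m))) with (S m + 2)%nat by lia.
      rewrite hg_rec. apply Rmult_lt_0_compat; [|exact IH1].
      apply Rdiv_lt_0_compat; [apply lt_0_INR; lia| lra]. }
  intros n Hn. destruct n; [lia|]. apply H.
Qed.

Lemma hg_odd : forall s, halfGamma (2*s+1) =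
  INR (fact (2*s)) * sqrt PI / (4 ^ s * INR (fact s)).
Proof.
  induction s.
  - simpl. field.
  - replace (2 * S s + 1)%nat with (S (2*s) + 2)%nat by lia.
    rewrite hg_rec. replace (S (2*s)) with (2*s+1)%nat by lia. rewrite IHs.
    replace (2 * S s)%nat with (S (S (2*s))) by lia.
    rewrite !fact_simpl, !mult_INR, !S_INR, plus_INR, mult_INR. simpl.
    pose proof (INR_fact_lt_0 s). pose proof (INR_fact_lt_0 (s+(s+0))).
    pose proof (pos_INR s).
    replace (s + (s+0))%nat with (2*s)%nat in * by lia.
    assert (4 ^ s <> 0) by (apply pow_nonzero; lra). field. repeat split; lra.
Qed.

Lemma hg_lower : forall d, (2 <= d)%nat -> forall m,
  INR (fact m) * halfGamma d <= halfGamma (2*m+d).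
Proof.
  intros d Hd. induction m.
  - simpl. lra.
  - destruct (2*m+d)%nat eqn:E; [lia|].
    replace (2 * S m + d)%nat with (S n + 2)%nat by lia.
    rewrite hg_rec, <- E, fact_simpl, mult_INR.
    assert (0 <= INR (fact m) * halfGamma d).
    { apply Rmult_le_pos. apply pos_INR. left; apply hg_pos; lia. }
    assert (INR (S m) <= INR (2*m+d) / 2).
    { rewrite S_INR, plus_INR, mult_INR. simpl.
      apply le_INR in Hd. simpl in Hd. lra. }
    rewrite Rmult_assoc. apply Rmult_le_compat; auto. apply pos_INR. rewrite E; exact IHm.
Qed.

Lemma hg_upper : forall d, (2 <= d)%nat -> forall m,
  halfGamma (2*m+d) * INR (fact d) <= halfGamma d * INR (fact (m+d)).
Proof.
  intros d Hd. induction m.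
  - simpl. lra.
  - destruct (2*m+d)%nat eqn:E; [lia|].
    replace (2 * S m + d)%nat with (S n + 2)%nat by lia.
    rewrite hg_rec, <- E. replace (S m + d)%nat with (S (m+d)) by lia.
    rewrite fact_simpl, mult_INR.
    assert (0 <= halfGamma (2*m+d)). { left; apply hg_pos; lia. }
    assert (0 <= INR (2*m+d) / 2 <= INR (S (m+d))).
    { rewrite S_INR, !plus_INR, mult_INR. simpl.
      pose proof (pos_INR m). pose proof (pos_INR d). lra. }
    pose proof (pos_INR (fact d)).
    assert (0 <= halfGamma d). { left; apply hg_pos; lia. }
    apply Rle_trans with (INR (S (m+d)) * (halfGamma (2*m+d) * INR (fact d))).
    + rewrite <- Rmult_assoc. apply Rmult_le_compat_r; [auto|].
      apply Rmult_le_compat_r; lra.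
    + replace (halfGamma d * (INR (S (m + d)) * INR (fact (m + d)))) with
        (INR (S (m+d)) * (halfGamma d * INR (fact (m+d)))) by ring.
      apply Rmult_le_compat_l; [apply pos_INR| rewrite E; exact IHm].
Qed.

Lemma fact_binom : forall a b, (fact (a+b) <= 2^(a+b) * fact a * fact b)%nat.
Proof.
  induction a as [|a IHa].
  - intro b. simpl. assert (2^b <> 0)%nat by (apply Nat.pow_nonzero; lia). set (F := fact b). nia.
  - induction b as [|b IHb].
    + rewrite Nat.add_0_r. assert (2^(S a) <> 0)%nat by (apply Nat.pow_nonzero; lia).
      change (fact 0) with 1%nat. set (F := fact (S a)) in *. nia.
    + replace (S a + S b)%nat with (S (S a + b)) by lia.
      rewrite fact_simpl. pose proof (IHa (S b)) as H1.
      replace (a + S b)%nat with (S a + b)%nat in H1 by lia.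
      rewrite (fact_simpl a), (fact_simpl b).
      rewrite Nat.pow_succ_r'.
      set (F := fact (S a + b)) in *. set (P := (2 ^ (S a + b))%nat) in *.
      rewrite fact_simpl in IHb, H1.
      set (fa := fact a) in *. set (fb := fact b) in *.
      assert (S a * F <= S a * (P * fa * (S b * fb)))%nat by (apply Nat.mul_le_mono_l; exact H1).
      assert (S b * F <= S b * (P * (S a * fa) * fb))%nat by (apply Nat.mul_le_mono_l; exact IHb).
      nia.
Qed.

Lemma sum_ge_term : forall f N i, (forall n, 0 <= f n) -> (i <= N)%nat -> f i <= sum_f_R0 f N.
Proof.
  intros f N i Hf. induction N; intro Hi.
  - replace i with 0%nat by lia. simpl. lra.
  - rewrite tech5. destruct (Nat.eq_dec i (S N)).
    + subst. pose proof (cond_pos_sum f N Hf). lra.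
    + pose proof (Hf (S N)). assert (f i <= sum_f_R0 f N) by (apply IHN; lia). lra.
Qed.

Lemma cp_nonneg : forall b, (forall m, 0 <= b m) -> forall a j, 0 <= coef_pow b a j.
Proof.
  intros b Hb. induction a; intro j; simpl.
  - destruct (Nat.eqb j 0); lra.
  - apply cond_pos_sum. intro n. apply Rmult_le_pos; auto.
Qed.

Lemma cp1 : forall b j, coef_pow b 1 j = b j.
Proof.
  intros b j.
  change (coef_pow b 1 j) with (sum_f_R0 (fun i => b i * (if Nat.eqb (j - i) 0 then 1 else 0)) j).
  destruct j.
  - simpl. ring.
  - rewrite tech5. rewrite Nat.sub_diag. change (0 =? 0)%nat with true.
    rewrite (sum_eq _ (fun _ => 0)).
    + rewrite sum_cte. ring.
    + intros i Hi. destruct i.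
      * simpl. ring.
      * replace (S j - S i =? 0)%nat with false by (symmetry; apply Nat.eqb_neq; lia). ring.
Qed.

Section CP.
Variables (b : nat -> R) (r c1 c2 : R).
Hypothesis Hr : 0 < r.
Hypothesis Hc2 : 0 < c2.
Hypothesis Hb : forall m, c2 * r ^ m <= b m <= c1 * r ^ m.

Lemma b_nonneg : forall m, 0 <= b m.
Proof. intro m. pose proof (Hb m). pose proof (pow_lt r m Hr). nra. Qed.

Lemma cp_lower : forall a j, c2 ^ (S a) * r ^ j <= coef_pow b (S a) j.
Proof.
  induction a; intro j.
  - rewrite cp1. simpl. pose proof (Hb j). lra.
  - change (coef_pow b (S (S a)) j) with
      (sum_f_R0 (fun i => b i * coef_pow b (S a) (j - i)) j).
    apply Rle_trans with (b 0%nat * coef_pow b (S a) (j - 0)).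
    + rewrite Nat.sub_0_r. pose proof (Hb 0%nat). simpl in H.
      pose proof (IHa j). pose proof (pow_lt r j Hr). pose proof (pow_lt c2 (S a) Hc2).
      change (c2 ^ S (S a)) with (c2 * c2 ^ S a).
      apply Rle_trans with (c2 * (c2 ^ S a * r ^ j)); [lra|].
      apply Rmult_le_compat; nra.
    + apply (sum_ge_term (fun i => b i * coef_pow b (S a) (j - i))); [|lia].
      intro n. apply Rmult_le_pos; [apply b_nonneg| apply cp_nonneg, b_nonneg].
Qed.

Lemma cp_upper : forall a j, coef_pow b (S a) j <= c1 ^ (S a) * r ^ j * INR (j+1) ^ a.
Proof.
  assert (Hc1 : 0 < c1). { pose proof (Hb 0%nat). simpl in H. lra. }
  induction a; intro j.
  - rewrite cp1. simpl. pose proof (Hb j). lra.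
  - change (coef_pow b (S (S a)) j) with
      (sum_f_R0 (fun i => b i * coef_pow b (S a) (j - i)) j).
    apply Rle_trans with (sum_f_R0 (fun _ => c1 ^ S (S a) * r ^ j * INR (j+1) ^ a) j).
    + apply sum_Rle. intros i Hi.
      pose proof (IHa (j - i)%nat). pose proof (Hb i).
      pose proof (cp_nonneg b b_nonneg (S a) (j - i)).
      apply Rle_trans with (c1 * r ^ i * (c1 ^ S a * r ^ (j - i) * INR (j - i + 1) ^ a)).
      * apply Rmult_le_compat; try lra. apply b_nonneg.
      * replace (c1 ^ S (S a) * r ^ j * INR (j + 1) ^ a) with
          (c1 * c1 ^ S a * (r ^ i * r ^ (j - i)) * INR (j + 1) ^ a).
        2:{ rewrite <- pow_add. replace (i + (j - i))%nat with j by lia. simpl. ring. }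
        assert (INR (j - i + 1) ^ a <= INR (j + 1) ^ a).
        { apply pow_incr. split; [apply pos_INR| apply le_INR; lia]. }
        pose proof (pow_lt r i Hr). pose proof (pow_lt r (j-i) Hr).
        pose proof (pow_lt c1 (S a) Hc1).
        assert (0 < c1 * r^i * (c1 ^ S a * r ^ (j - i))) by
          (apply Rmult_lt_0_compat; apply Rmult_lt_0_compat; lra).
        replace (c1 * r ^ i * (c1 ^ S a * r ^ (j - i) * INR (j - i + 1) ^ a)) with
          ((c1 * r^i * (c1 ^ S a * r ^ (j - i))) * INR (j - i + 1) ^ a) by ring.
        replace (c1 * c1 ^ S a * (r ^ i * r ^ (j - i)) * INR (j + 1) ^ a) with
          ((c1 * r^i * (c1 ^ S a * r ^ (j - i))) * INR (j + 1) ^ a) by ring.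
        apply Rmult_le_compat_l; lra.
    + rewrite sum_cte. replace (INR (S j)) with (INR (j+1)) by (f_equal; lia).
      simpl. lra.
Qed.
End CP.

Lemma bern : forall e n, 0 <= e <= 1 -> 1 - INR n * e <= (1 - e) ^ n.
Proof.
  intros e n He. induction n.
  - simpl. lra.
  - rewrite S_INR. simpl. pose proof (pow_le (1-e) n ltac:(lra)). pose proof (pos_INR n).
    destruct (Rle_dec 0 (1 - INR n * e)).
    + nra.
    + nra.
Qed.

Lemma lin_geo : forall t s, 0 <= t < 1 -> INR (s+1) * t ^ s <= / (1 - t).
Proof.
  intros t s Ht.
  assert (H : INR (s+1) * t ^ s <= sum_f_R0 (fun i => t ^ i) s).
  { induction s.
    - simpl. lra.
    - rewrite tech5. replace (INR (S s + 1)) with (INR (s+1) + 1)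
        by (rewrite <- S_INR; f_equal; lia).
      simpl. pose proof (pow_le t s ltac:(lra)).
      assert (t * (INR (s+1) * t^s) <= INR (s+1) * t ^ s).
      { assert (0 <= INR (s+1) * t^s) by (apply Rmult_le_pos; [apply pos_INR|assumption]). nra. }
      lra. }
  rewrite tech3 in H by lra.
  pose proof (pow_le t (S s) ltac:(lra)).
  apply Rle_trans with ((1 - t ^ S s) / (1 - t)); [exact H|].
  unfold Rdiv. rewrite <- (Rmult_1_l (/ (1 - t))) at 2.
  apply Rmult_le_compat_r; [left; apply Rinv_0_lt_compat; lra| lra].
Qed.

Lemma poly_geo : forall r p, 0 < r < 1 -> exists M, 0 < M /\
  forall s, INR (2*s+1) ^ p * r ^ (2*s) <= M * r ^ s.
Proof.
  intros r p Hr.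
  set (a := S p).
  assert (Ha : 1 <= INR a) by (unfold a; rewrite S_INR; pose proof (pos_INR p); lra).
  set (t := 1 - (1 - r) / INR a).
  assert (Ht1 : (1 - r) / INR a <= 1 - r).
  { unfold Rdiv. rewrite <- (Rmult_1_r (1 - r)) at 2. apply Rmult_le_compat_l; [lra|].
    rewrite <- Rinv_1. apply Rinv_le_contravar; lra. }
  assert (Ht0 : 0 < (1 - r) / INR a) by (apply Rdiv_lt_0_compat; lra).
  assert (Ht : r <= t < 1) by (unfold t; lra).
  assert (Hta : r <= t ^ a).
  { pose proof (bern ((1 - r) / INR a) a ltac:(lra)). unfold t.
    replace (INR a * ((1 - r) / INR a)) with (1 - r) in H by (field; lra). lra. }
  exists ((2 / (1 - t)) ^ p). split.
  { apply pow_lt. apply Rdiv_lt_0_compat; lra. }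
  intro s.
  assert (H1 : INR (2*s+1) * t ^ s <= 2 / (1 - t)).
  { pose proof (lin_geo t s ltac:(lra)).
    assert (INR (2*s+1) <= 2 * INR (s+1)) by
      (rewrite !plus_INR, mult_INR; simpl; pose proof (pos_INR s); lra).
    pose proof (pow_le t s ltac:(lra)). unfold Rdiv. nra. }
  assert (H2 : r ^ s <= (t ^ s) ^ p).
  { apply Rle_trans with ((t ^ a) ^ s). apply pow_incr; lra.
    rewrite <- pow_mult, <- pow_mult. unfold a.
    replace (S p * s)%nat with (p * s + s)%nat by lia.
    rewrite pow_add, Nat.mul_comm. pose proof (pow_le t (s * p) ltac:(lra)).
    assert (t ^ s <= 1) by (rewrite <- (pow1 s); apply pow_incr; lra).
    pose proof (pow_le t s ltac:(lra)). nra. }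
  pose proof (pow_le t s ltac:(lra)).
  assert (H3 : INR (2*s+1) ^ p * r ^ s <= (2 / (1 - t)) ^ p).
  { apply Rle_trans with (INR (2*s+1) ^ p * (t ^ s) ^ p).
    - apply Rmult_le_compat_l; [apply pow_le, pos_INR | exact H2].
    - rewrite <- Rpow_mult_distr. apply pow_incr. split; [|exact H1].
      apply Rmult_le_pos; [apply pos_INR|assumption]. }
  replace (r ^ (2 * s)) with (r ^ s * r ^ s) by (rewrite <- pow_add; f_equal; lia).
  pose proof (pow_le r s ltac:(lra)).
  replace (INR (2 * s + 1) ^ p * (r ^ s * r ^ s)) with ((INR (2 * s + 1) ^ p * r ^ s) * r ^ s) by ring.
  apply Rmult_le_compat_r; assumption.
Qed.

Lemma series_conv : forall (T : nat -> R) B, (forall s, 0 <= T s) ->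
  (forall N, sum_f_R0 T N <= B) -> exists l, infinite_sum T l /\ T 0%nat <= l /\ l <= B.
Proof.
  intros T B HT HB.
  assert (Hg : Un_growing (sum_f_R0 T)).
  { intro n. rewrite tech5. pose proof (HT (S n)). lra. }
  assert (Hu : has_ub (sum_f_R0 T)).
  { exists B. intros x [i ->]. apply HB. }
  destruct (growing_cv _ Hg Hu) as [l Hl].
  exists l. split; [exact Hl|]. split.
  - pose proof (growing_ineq _ _ Hg Hl 0%nat). simpl in H. exact H.
  - destruct (Rle_dec l B) as [|Hn]; [assumption|].
    exfalso. destruct (Hl (l - B)) as [N HN]; [lra|].
    specialize (HN N (le_n N)). specialize (HB N). unfold Rdist in HN.
    rewrite Rabs_minus_sym in HN. pose proof (Rle_abs (l - sum_f_R0 T N)). lra.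
Qed.

Lemma div_le_cross : forall a b c e, 0 < b -> 0 < e -> a * e <= c * b -> a / b <= c / e.
Proof.
  intros a b c e Hb He H.
  replace (a / b) with (a * e * / (b * e)) by (field; lra).
  replace (c / e) with (c * b * / (b * e)) by (field; lra).
  apply Rmult_le_compat_r; [left; apply Rinv_0_lt_compat; nra| exact H].
Qed.

Lemma fact_binomR : forall a b, INR (fact (a+b)) <= 2^(a+b) * INR (fact a) * INR (fact b).
Proof.
  intros a b. pose proof (fact_binom a b) as H. apply le_INR in H.
  rewrite !mult_INR, pow_INR in H. simpl (INR 2) in H. exact H.
Qed.

Lemma F_upper : forall d, (2 <= d)%nat -> forall k s,
  INR (fact (2*s+k)) / INR (fact (2*s)) * (halfGamma (2*s+1) / halfGamma (2*s+2*k+d))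
  <= 2 ^ k * sqrt PI / halfGamma d.
Proof.
  intros d Hd k s. rewrite hg_odd.
  pose proof (hg_lower d Hd (s+k)) as HX.
  replace (2*(s+k)+d)%nat with (2*s+2*k+d)%nat in HX by lia.
  set (X := halfGamma (2*s+2*k+d)) in *.
  assert (Hhd : 0 < halfGamma d) by (apply hg_pos; lia).
  pose proof (INR_fact_lt_0 (s+k)). pose proof (INR_fact_lt_0 s).
  pose proof (INR_fact_lt_0 (2*s)). pose proof (INR_fact_lt_0 (2*s+k)).
  assert (HXp : 0 < X) by (assert (0 < INR (fact (s+k)) * halfGamma d) by (apply Rmult_lt_0_compat; lra); lra).
  assert (Hsp : 0 < sqrt PI) by (apply sqrt_lt_R0, PI_RGT_0).
  assert (H4 : 0 < 4 ^ s) by (apply pow_lt; lra).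
  assert (H2k : 0 < 2 ^ k) by (apply pow_lt; lra).
  replace (INR (fact (2 * s + k)) / INR (fact (2 * s)) *
    (INR (fact (2 * s)) * sqrt PI / (4 ^ s * INR (fact s)) / X)) with
    (INR (fact (2*s+k)) * sqrt PI / (4 ^ s * INR (fact s) * X)) by (field; lra).
  apply div_le_cross; [apply Rmult_lt_0_compat; [apply Rmult_lt_0_compat|]; lra| lra|].
  pose proof (fact_binomR s (s+k)) as HB.
  replace (s + (s+k))%nat with (2*s+k)%nat in HB by lia.
  replace (2 ^ (2*s+k)) with (4^s * 2^k) in HB
    by (rewrite pow_add, pow_mult; replace (2^2) with 4 by (simpl; ring); ring).
  apply Rle_trans with ((4^s*2^k*INR (fact s)*INR (fact (s+k))) * sqrt PI * halfGamma d).
  - apply Rmult_le_compat_r; [lra|]. apply Rmult_le_compat_r; lra.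
  - replace (4 ^ s * 2 ^ k * INR (fact s) * INR (fact (s + k)) * sqrt PI * halfGamma d)
      with ((2^k*sqrt PI*4^s*INR (fact s)) * (INR (fact (s + k)) * halfGamma d)) by ring.
    replace (2 ^ k * sqrt PI * (4 ^ s * INR (fact s) * X)) with
      ((2^k*sqrt PI*4^s*INR (fact s)) * X) by ring.
    apply Rmult_le_compat_l; [|exact HX].
    repeat apply Rmult_le_pos; lra.
Qed.

Lemma pref_eq : forall d k, (2 <= d)%nat -> lambda_pref d k = sqrt PI ^ (d - 1) / 2 ^ k.
Proof.
  intros d k Hd. unfold lambda_pref, sphere_area.
  assert (0 < halfGamma (d - 1)) by (apply hg_pos; lia).
  assert (0 < 2 ^ k) by (apply pow_lt; lra).
  rewrite pow_add. simpl (2 ^ 1). field. lra.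
Qed.

Theorem mainTheorem4 :
  forall (d : nat), (2 <= d)%nat ->
  forall (r c1 c2 : R), 0 < r -> r < 1 -> 0 < c2 -> c2 <= c1 ->
  forall (alpha : nat), (1 <= alpha)%nat ->
  exists C1 C2 : R, 0 < C1 /\ 0 < C2 /\
    forall (f1 : R -> R) (b : nat -> R),
      (forall t, -1 <= t <= 1 -> infinite_sum (fun m => b m * t ^ m) (f1 t)) ->
      (forall m, c2 * r ^ m <= b m <= c1 * r ^ m) ->
      forall m : nat, exists l : R,
        is_lambda d b alpha m l /\
        C2 * (r / 4) ^ m <= l /\
        l <= C1 * INR (m + 1) ^ (alpha - 1) * r ^ m.
Proof.
  intros d Hd r c1 c2 Hr Hr1 Hc2 Hc12 alpha Halpha.
  destruct alpha as [|p]; [lia|].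
  replace (S p - 1)%nat with p by lia.
  destruct (poly_geo r p ltac:(lra)) as [M [HM HMb]].
  set (sp := sqrt PI). set (hd := halfGamma d).
  assert (Hsp : 0 < sp) by (apply sqrt_lt_R0, PI_RGT_0).
  assert (Hhd : 0 < hd) by (apply hg_pos; lia).
  assert (Hc1 : 0 < c1) by lra.
  assert (Hspd : 0 < sp ^ d) by (apply pow_lt; lra).
  assert (Hspd1 : 0 < sp ^ (d-1)) by (apply pow_lt; lra).
  assert (H2d : 0 < 2 ^ d) by (apply pow_lt; lra).
  assert (Hc1p : 0 < c1 ^ S p) by (apply pow_lt; lra).
  assert (Hc2p : 0 < c2 ^ S p) by (apply pow_lt; lra).
  exists (sp ^ d / hd * c1 ^ S p * M / (1 - r)), (sp ^ d * c2 ^ S p / (hd * 2 ^ d)).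
  split. { apply Rdiv_lt_0_compat; [|lra]. apply Rmult_lt_0_compat; [|lra]. apply Rmult_lt_0_compat; [|lra]. apply Rdiv_lt_0_compat; lra. }
  split; [apply Rdiv_lt_0_compat; [apply Rmult_lt_0_compat| apply Rmult_lt_0_compat]; lra|].
  intros f1 b _ Hb k.
  set (T := fun s => lambda_pref d k * lambda_term d b (S p) k s).
  assert (Hpref := pref_eq d k Hd). fold sp in Hpref.
  assert (H2k : 0 < 2 ^ k) by (apply pow_lt; lra).
  assert (Hrk : 0 < r ^ k) by (apply pow_lt; lra).
  assert (Hbn := b_nonneg b r c1 c2 Hr Hc2 Hb).
  assert (HT0 : forall s, 0 <= T s).
  { intro s. unfold T, lambda_term. rewrite Hpref.
    pose proof (cp_nonneg b Hbn (S p) (2*s+k)).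
    pose proof (INR_fact_lt_0 (2*s+k)). pose proof (INR_fact_lt_0 (2*s)).
    assert (0 < halfGamma (2*s+1)) by (apply hg_pos; lia).
    assert (0 < halfGamma (2*s+2*k+d)) by (apply hg_pos; lia).
    apply Rmult_le_pos; [left; apply Rdiv_lt_0_compat; lra|].
    apply Rmult_le_pos; [apply Rmult_le_pos; [lra|]|]; left; apply Rdiv_lt_0_compat; lra. }
  set (G := sp ^ d / hd * c1 ^ S p * r ^ k * INR (k+1) ^ p * M).
  assert (HTu : forall s, T s <= r ^ s * G).
  { intro s. unfold T, lambda_term. rewrite Hpref.
    pose proof (cp_nonneg b Hbn (S p) (2*s+k)) as Hcp0.
    pose proof (F_upper d Hd k s) as HF. fold sp hd in HF.
    set (F := INR (fact (2 * s + k)) / INR (fact (2 * s)) *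
         (halfGamma (2 * s + 1) / halfGamma (2 * s + 2 * k + d))) in *.
    replace (sp ^ (d - 1) / 2 ^ k * (coef_pow b (S p) (2 * s + k) *
      (INR (fact (2 * s + k)) / INR (fact (2 * s))) *
      (halfGamma (2 * s + 1) / halfGamma (2 * s + 2 * k + d)))) with
      ((sp ^ (d - 1) / 2 ^ k * coef_pow b (S p) (2 * s + k)) * F) by (unfold F; ring).
    apply Rle_trans with (sp ^ (d - 1) / 2 ^ k * coef_pow b (S p) (2 * s + k) * (2 ^ k * sp / hd)).
    { apply Rmult_le_compat_l; [|exact HF].
      apply Rmult_le_pos; [left; apply Rdiv_lt_0_compat; lra| exact Hcp0]. }
    replace (sp ^ (d - 1) / 2 ^ k * coef_pow b (S p) (2 * s + k) * (2 ^ k * sp / hd))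
      with (sp ^ d / hd * coef_pow b (S p) (2 * s + k)).
    2:{ assert (Esp : sp ^ d = sp * sp ^ (d - 1)) by (replace d with (S (d-1)) at 1 by lia; reflexivity). rewrite Esp. field. split; lra. }
    pose proof (cp_upper b r c1 c2 Hr Hc2 Hb p (2*s+k)) as Hup.
    assert (Hin : INR (2*s+k+1) ^ p <= INR (k+1) ^ p * INR (2*s+1) ^ p).
    { rewrite <- Rpow_mult_distr. apply pow_incr. split; [apply pos_INR|].
      rewrite <- mult_INR. apply le_INR. nia. }
    pose proof (HMb s) as HMs.
    rewrite pow_add in Hup.
    pose proof (pow_le r (2*s) ltac:(lra)).
    pose proof (pow_le (INR (2*s+k+1)) p (pos_INR _)).
    pose proof (pow_le (INR (k+1)) p (pos_INR _)).
    pose proof (pow_le (INR (2*s+1)) p (pos_INR _)).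
    assert (Hc : coef_pow b (S p) (2 * s + k) <=
      c1 ^ S p * r ^ k * INR (k+1) ^ p * (INR (2*s+1) ^ p * r ^ (2*s))).
    { apply Rle_trans with (1 := Hup).
      replace (c1 ^ S p * (r ^ (2 * s) * r ^ k) * INR (2 * s + k + 1) ^ p) with
        ((c1 ^ S p * r ^ k * r ^ (2*s)) * INR (2 * s + k + 1) ^ p) by ring.
      replace (c1 ^ S p * r ^ k * INR (k + 1) ^ p * (INR (2 * s + 1) ^ p * r ^ (2 * s))) with
        ((c1 ^ S p * r ^ k * r ^ (2*s)) * (INR (k + 1) ^ p * INR (2 * s + 1) ^ p)) by ring.
      apply Rmult_le_compat_l; [|exact Hin].
      apply Rmult_le_pos; [apply Rmult_le_pos|]; lra. }
    assert (Hc' : coef_pow b (S p) (2 * s + k) <=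
      c1 ^ S p * r ^ k * INR (k+1) ^ p * (M * r ^ s)).
    { apply Rle_trans with (1 := Hc). apply Rmult_le_compat_l; [|exact HMs].
      apply Rmult_le_pos; [apply Rmult_le_pos|]; lra. }
    unfold G.
    replace (r ^ s * (sp ^ d / hd * c1 ^ S p * r ^ k * INR (k + 1) ^ p * M)) with
      (sp ^ d / hd * (c1 ^ S p * r ^ k * INR (k+1) ^ p * (M * r ^ s))) by ring.
    apply Rmult_le_compat_l; [left; apply Rdiv_lt_0_compat; lra| exact Hc']. }
  assert (HG : 0 <= G).
  { unfold G. apply Rmult_le_pos; [|lra]. apply Rmult_le_pos; [|apply pow_le, pos_INR].
    apply Rmult_le_pos; [|lra]. apply Rmult_le_pos; [left; apply Rdiv_lt_0_compat|]; lra. }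
  assert (HS : forall N, sum_f_R0 T N <= G / (1 - r)).
  { intro N. apply Rle_trans with (sum_f_R0 (fun s => r ^ s * G) N).
    - apply sum_Rle. intros; apply HTu.
    - rewrite <- scal_sum, tech3 by lra. pose proof (pow_le r (S N) ltac:(lra)).
      unfold Rdiv. rewrite <- Rmult_assoc.
      apply Rmult_le_compat_r; [left; apply Rinv_0_lt_compat; lra|]. nra. }
  destruct (series_conv T _ HT0 HS) as [l [Hl [Hl0 HlB]]].
  exists l. split; [exact Hl|]. split.
  - apply Rle_trans with (2 := Hl0). unfold T, lambda_term. rewrite Hpref.
    replace (2 * 0 + k)%nat with k by lia.
    replace (2 * 0 + 1)%nat with 1%nat by lia. replace (2 * 0 + 2 * k + d)%nat with (2*k+d)%nat by lia.
    replace (2*0)%nat with 0%nat by lia.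
    change (halfGamma 1) with sp. change (INR (fact 0)) with 1.
    set (Y := halfGamma (2*k+d)).
    assert (HY0 : 0 < Y) by (apply hg_pos; lia).
    pose proof (hg_upper d Hd k) as HY. fold Y hd in HY.
    pose proof (fact_binomR k d) as HBk.
    pose proof (INR_fact_lt_0 k). pose proof (INR_fact_lt_0 d).
    assert (HY2 : Y <= hd * 2 ^ (k+d) * INR (fact k)).
    { assert (Y * INR (fact d) <= (hd * 2 ^ (k+d) * INR (fact k)) * INR (fact d)).
      { apply Rle_trans with (1 := HY).
        replace (hd * 2 ^ (k + d) * INR (fact k) * INR (fact d)) with
          (hd * (2 ^ (k + d) * INR (fact k) * INR (fact d))) by ring.
        apply Rmult_le_compat_l; lra. }
      apply Rmult_le_reg_r with (INR (fact d)); lra. }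
    pose proof (cp_lower b r c1 c2 Hr Hc2 Hb p k) as Hlo.
    replace (sp ^ (d - 1) / 2 ^ k * (coef_pow b (S p) k * (INR (fact k) / 1) * (sp / Y)))
      with ((sp ^ (d - 1) / 2 ^ k * INR (fact k) * sp) * coef_pow b (S p) k * / Y) by (field; lra).
    assert (HA : 0 < sp ^ (d - 1) / 2 ^ k * INR (fact k) * sp).
    { apply Rmult_lt_0_compat; [apply Rmult_lt_0_compat; [apply Rdiv_lt_0_compat|]|]; lra. }
    assert (H2kd : 0 < 2 ^ (k+d)) by (apply pow_lt; lra).
    assert (HZ : 0 < hd * 2 ^ (k+d) * INR (fact k)).
    { apply Rmult_lt_0_compat; [apply Rmult_lt_0_compat|]; lra. }
    apply Rle_trans with ((sp ^ (d - 1) / 2 ^ k * INR (fact k) * sp) * (c2 ^ S p * r ^ k) * / (hd * 2 ^ (k+d) * INR (fact k))).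
    + assert (Esp : sp ^ d = sp * sp ^ (d - 1)) by (replace d with (S (d-1)) at 1 by lia; reflexivity).
      rewrite Esp, pow_add. unfold Rdiv. rewrite Rpow_mult_distr, pow_inv.
      replace (4 ^ k) with (2 ^ k * 2 ^ k) by (rewrite <- Rpow_mult_distr; f_equal; ring).
      right. field. repeat split; lra.
    + apply Rmult_le_compat.
      * apply Rmult_le_pos; [lra|]. apply Rmult_le_pos; lra.
      * left; apply Rinv_0_lt_compat; lra.
      * apply Rmult_le_compat_l; lra.
      * apply Rinv_le_contravar; lra.
  - apply Rle_trans with (1 := HlB). unfold G. right. field. lra.
Qed.
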